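(* Let $f:\mathbb{R}^d\to\mathbb{R}$ be $\mu$-strongly convex, $L$-smooth (i.e. $\mu I\preceq\nabla^2 f(x)\preceq LI$ for all $x$) and $M$-strongly self-concordant. Let $1\le k<d$, let $x,x_+\in\mathbb{R}^d$, and let $B$ be a symmetric matrix with $B\succeq\nabla^2 f(x)$. Let $r:=\|x_+-x\|_{\nabla^2 f(x)}$, $P:=\big(1+\frac{Mr}{2}\big)^2B$ and $$B_+:=\mathrm{SR}\text{-}k\big(P,\nabla^2 f(x_+),E_k(P-\nabla^2 f(x_+))\big).$$ Then $B_+\succeq\nabla^2 f(x_+)$ and $$\frac{\mathrm{tr}(B_+-\nabla^2 f(x_+))}{\mathrm{tr}(\nabla^2 f(x_+))}\le\Big(1-\frac kd\Big)\Big(1+\frac{Mr}{2}\Big)^4\Big(\frac{\mathrm{tr}(B-\nabla^2 f(x))}{\mathrm{tr}(\nabla^2 f(x))}+2Mr\Big).$$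
   Context: $f$ is $M$-strongly self-concordant if $\nabla^2 f(y)-\nabla^2 f(x)\preceq M\|y-x\|_{\nabla^2 f(z)}\nabla^2 f(w)$ for all $x,y,z,w\in\mathbb{R}^d$, where $\|u\|_A=\sqrt{u^\top A u}$. For a symmetric matrix $C\in\mathbb{R}^{d\times d}$ and $1\le k<d$, $E_k(C)=[e_{i_1},\dots,e_{i_k}]\in\mathbb{R}^{d\times k}$, where $e_j$ is the $j$-th standard basis vector and $i_1,\dots,i_k$ are the indices of the $k$ largest diagonal entries of $C$. For symmetric positive definite $G\succeq A$ and full-rank $U\in\mathbb{R}^{d\times k}$: $\mathrm{SR}\text{-}k(G,A,U)=G$ if $GU=AU$, and otherwise $\mathrm{SR}\text{-}k(G,A,U)=G-(G-A)U\big(U^\top(G-A)U\big)^{\dagger}U^\top(G-A)$, where $\dagger$ is the Moore–Penrose pseudoinverse. *)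

(* Defs.v *)
From HB Require Import structures.
From mathcomp Require Import all_boot all_order all_algebra.
From mathcomp Require Import all_classical all_reals all_analysis.
Set Implicit Arguments. Unset Strict Implicit. Unset Printing Implicit Defensive.
Import Order.TTheory GRing.Theory Num.Theory.
Import numFieldNormedType.Exports.
Local Open Scope ring_scope.

Section Defs.
Variable R : realType.

Definition qform n (A : 'M[R]_n) (u : 'rV[R]_n) : R := (u *m A *m u^T) 0 0.

Definition anorm n (A : 'M[R]_n) (u : 'rV[R]_n) : R := Num.sqrt (qform A u).

Definition psd n (A : 'M[R]_n) : Prop := A^T = A /\ forall u, 0 <= qform A u.

Definition loewner_le n (A B : 'M[R]_n) : Prop := psd (B - A).

Definition hessian_of n (f : 'rV[R]_n -> R) (H : 'rV[R]_n -> 'M[R]_n) : Prop :=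
  forall x, differentiable f x /\
    forall u, differentiable ('D_u f) x /\
      forall v, 'D_v ('D_u f) x = (u *m H x *m v^T) 0 0.

Definition strongly_self_concordant n (H : 'rV[R]_n -> 'M[R]_n) (M : R) : Prop :=
  forall x y z w, loewner_le (H y - H x) ((M * anorm (H z) (y - x)) *: H w).

(* Moore-Penrose pseudoinverse: the (unique) X with the four Penrose conditions *)
Definition penrose m n (A : 'M[R]_(m, n)) (X : 'M[R]_(n, m)) : Prop :=
  [/\ A *m X *m A = A, X *m A *m X = X, (A *m X)^T = A *m X & (X *m A)^T = X *m A].

Definition mp_pinv m n (A : 'M[R]_(m, n)) : 'M[R]_(n, m) :=
  xget 0 [set X | penrose A X].

Definition SRk n k (G A : 'M[R]_n) (U : 'M[R]_(n, k)) : 'M[R]_n :=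
  if G *m U == A *m U then G
  else G - (G - A) *m U *m mp_pinv (U^T *m (G - A) *m U) *m U^T *m (G - A).

Definition sel_mx n k (s : 'I_k -> 'I_n) : 'M[R]_(n, k) :=
  \matrix_(i < n, j < k) (i == s j)%:R.

(* s selects indices of k largest diagonal entries of C (any tie-breaking) *)
Definition selects_topk n k (C : 'M[R]_n) (s : 'I_k -> 'I_n) : Prop :=
  injective s /\ forall j i, (forall j', s j' != i) -> C i i <= C (s j) (s j).

End Defs.

(* Main.v *)
Require Import Defs.
From HB Require Import structures.
From mathcomp Require Import all_boot all_order all_algebra.
From mathcomp Require Import all_classical all_reals all_analysis.
From mathcomp Require Import ring lra zify.
Import Order.TTheory GRing.Theory Num.Theory.
Import numFieldNormedType.Exports.
Local Open Scope ring_scope.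

Section Aux.
Set Implicit Arguments.
Variable R : realType.

Lemma qformD n (A B : 'M[R]_n) u : qform (A + B) u = qform A u + qform B u.
Proof. by rewrite /qform mulmxDr mulmxDl mxE. Qed.
Lemma qformN n (A : 'M[R]_n) u : qform (- A) u = - qform A u.
Proof. by rewrite /qform mulmxN mulNmx mxE. Qed.
Lemma qformB n (A B : 'M[R]_n) u : qform (A - B) u = qform A u - qform B u.
Proof. by rewrite qformD qformN. Qed.
Lemma qformZ n a (A : 'M[R]_n) u : qform (a *: A) u = a * qform A u.
Proof. by rewrite /qform -scalemxAr -scalemxAl mxE. Qed.
Lemma qform_opp n (A : 'M[R]_n) u : qform A (- u) = qform A u.
Proof. by rewrite /qform mulNmx raddfN /= mulmxN mulNmx opprK. Qed.
Lemma qform_e n (A : 'M[R]_n) i : qform A (delta_mx 0 i) = A i i.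
Proof. by rewrite /qform -rowE trmx_delta -colE !mxE. Qed.
Lemma qform_1 n (u : 'rV[R]_n) : 0 <= qform 1%:M u.
Proof.
rewrite /qform mulmx1 mxE; apply: sumr_ge0 => i _; rewrite mxE; by rewrite -expr2 sqr_ge0.
Qed.
Lemma qform_scalar n a (u : 'rV[R]_n) : qform a%:M u = a * qform 1%:M u.
Proof. by rewrite -qformZ scalemx1. Qed.
Lemma trace_qform n (A : 'M[R]_n) : \tr A = \sum_i qform A (delta_mx 0 i).
Proof. by apply: eq_bigr => i _; rewrite qform_e. Qed.
Lemma psd_tr n (A : 'M[R]_n) : psd A -> 0 <= \tr A.
Proof. by case=> _ h; rewrite trace_qform; apply: sumr_ge0 => i _. Qed.
Lemma psd_add n (A B : 'M[R]_n) : psd A -> psd B -> psd (A + B).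
Proof.
case=> hA qA [hB qB]; split; first by rewrite linearD /= hA hB.
by move=> u; rewrite qformD addr_ge0.
Qed.
Lemma psd_scale n a (A : 'M[R]_n) : 0 <= a -> psd A -> psd (a *: A).
Proof.
move=> ha [hA qA]; split; first by rewrite linearZ /= hA.
by move=> u; rewrite qformZ mulr_ge0.
Qed.
Lemma psd_scalar n a : 0 <= a -> psd (a%:M : 'M[R]_n).
Proof. by move=> ha; split; [exact: tr_scalar_mx| move=> u; rewrite qform_scalar mulr_ge0 // qform_1]. Qed.
Lemma penrose_uniq m n (A : 'M[R]_(m,n)) X Y : penrose A X -> penrose A Y -> X = Y.
Proof.
case=> [h1 h2 h3 h4] [k1 k2 k3 k4].
have eX : X *m A *m Y = X.
  have e1 : X *m A *m Y = X *m ((A *m X)^T *m (A *m Y)^T) by rewrite h3 k3 !mulmxA h2.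
  by rewrite e1 -trmx_mul mulmxA k1 h3 mulmxA h2.
have eY : X *m A *m Y = Y.
  have e2 : X *m A *m Y = (X *m A)^T *m (Y *m A)^T *m Y.
    by rewrite h4 k4 -(mulmxA (X *m A)) k2.
  by rewrite e2 -trmx_mul !mulmxA -(mulmxA Y A X) -(mulmxA Y (A *m X) A) h1 k4 k2.
by rewrite -eX eY.
Qed.

Lemma rowv_eq0 n (w : 'rV[R]_n) : (w *m w^T) 0 0 = 0 -> w = 0.
Proof.
rewrite mxE => /eqP; rewrite psumr_eq0 => [/allP h|i _]; last first.
  by rewrite mxE -expr2 sqr_ge0.
apply/rowP => i; rewrite mxE; have := h i (mem_index_enum _).
by rewrite mxE -expr2 sqrf_eq0 => /eqP.
Qed.

Lemma gram_unit r n (G : 'M[R]_(r,n)) : row_free G -> G *m G^T \in unitmx.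
Proof.
move=> fG; rewrite -row_free_unit -kermx_eq0; apply/eqP/row_matrixP => i.
rewrite row0; set v := row i _.
have hv : v *m (G *m G^T) = 0 by rewrite /v -row_mul mulmx_ker row0.
have : v *m G = 0.
  apply: rowv_eq0; rewrite trmx_mul mulmxA -(mulmxA v) hv.
  by rewrite mul0mx mxE.
by move/eqP; rewrite mulmx_free_eq0 // => /eqP.
Qed.

Lemma penrose_exists m n (A : 'M[R]_(m,n)) : exists X, penrose A X.
Proof.
have [r [F [G [eA fG fF]]]] : exists r (F : 'M[R]_(m,r)) (G : 'M[R]_(r,n)),
    [/\ A = F *m G, row_free G & row_free F^T].
  exists (\rank A), (col_base A), (row_base A); split.
  - by rewrite mulmx_base.
  - exact: row_base_free.
  - by rewrite /row_free mxrank_tr; exact: col_base_full.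
have uG := gram_unit G fG.
have uF := gram_unit F^T fF; rewrite trmxK in uF.
set iG := invmx (G *m G^T); set iF := invmx (F^T *m F).
have eG : G *m G^T *m iG = 1%:M by rewrite mulmxV.
have eF : iF *m (F^T *m F) = 1%:M by rewrite mulVmx.
have sG : iG^T = iG by rewrite trmx_inv trmx_mul trmxK.
have sF : iF^T = iF by rewrite trmx_inv trmx_mul trmxK.
exists (G^T *m iG *m iF *m F^T).
have AX : A *m (G^T *m iG *m iF *m F^T) = F *m iF *m F^T.
  by rewrite eA !mulmxA -(mulmxA F G) -(mulmxA F _ iG) eG mulmx1.
have XA : G^T *m iG *m iF *m F^T *m A = G^T *m iG *m G.
  rewrite eA !mulmxA -(mulmxA (G^T *m iG *m iF) F^T F).
  by rewrite -(mulmxA (G^T *m iG) iF) eF mulmx1.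
split.
- rewrite AX eA !mulmxA -(mulmxA (F *m iF) F^T F).
  by rewrite -(mulmxA F iF) eF mulmx1.
- rewrite XA !mulmxA -(mulmxA (G^T *m iG) G G^T).
  by rewrite -(mulmxA (G^T *m iG) (G *m G^T) iG) eG mulmx1.
- by rewrite AX !trmx_mul trmxK sF mulmxA.
- by rewrite XA !trmx_mul trmxK sG mulmxA.
Qed.

Lemma mp_pinv_penrose m n (A : 'M[R]_(m,n)) : penrose A (mp_pinv A).
Proof. by rewrite /mp_pinv; apply: xgetPex; have [X hX] := penrose_exists A; exists X. Qed.

Lemma mp_pinv_sym n (A : 'M[R]_n) : A^T = A -> (mp_pinv A)^T = mp_pinv A.
Proof.
move=> sA; apply: (penrose_uniq _ (mp_pinv_penrose A)).
have [h1 h2 h3 h4] := mp_pinv_penrose A; set X := mp_pinv A in h1 h2 h3 h4 *.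
split.
- have -> : A *m X^T *m A = (A *m X *m A)^T by rewrite !trmx_mul sA mulmxA.
  by rewrite h1 sA.
- have -> : X^T *m A *m X^T = (X *m A *m X)^T by rewrite !trmx_mul sA mulmxA.
  by rewrite h2.
- have e : A *m X^T = X *m A by rewrite -{1}sA -trmx_mul h4.
  by rewrite e h4.
- have e : X^T *m A = A *m X by rewrite -{1}sA -trmx_mul h3.
  by rewrite e h3.
Qed.

Section SR.
Variables (n k : nat) (C : 'M[R]_n) (U : 'M[R]_(n,k)).
Hypothesis pC : psd C.
Let S := U^T *m C *m U.
Let X := mp_pinv S.
Let E := C *m U *m X *m U^T *m C.
Let D := C - E.

Lemma sC : C^T = C. Proof. by case: pC. Qed.
Lemma sS : S^T = S. Proof. by rewrite /S !trmx_mul trmxK sC mulmxA. Qed.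
Lemma sX : X^T = X. Proof. exact: mp_pinv_sym sS. Qed.
Lemma hXSX p (Y : 'M[R]_(k,p)) : X *m (U^T *m (C *m (U *m (X *m Y)))) = X *m Y.
Proof.
have [_ h2 _ _] := mp_pinv_penrose S.
by rewrite !mulmxA; move: h2; rewrite /S !mulmxA -/X => ->.
Qed.
Lemma hSXS p (Y : 'M[R]_(k,p)) : U^T *m (C *m (U *m (X *m (U^T *m (C *m (U *m Y)))))) = U^T *m (C *m (U *m Y)).
Proof.
have [h1 _ _ _] := mp_pinv_penrose S.
by rewrite !mulmxA; move: h1; rewrite /S !mulmxA -/X => ->.
Qed.

Lemma qformS z : qform S z = qform C (z *m U^T).
Proof. by rewrite /qform /S trmx_mul trmxK !mulmxA. Qed.

Lemma qformX y : qform X y = qform C (y *m X *m U^T).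
Proof.
by rewrite /qform !trmx_mul trmxK sX -!mulmxA hXSX.
Qed.

Lemma qformE v : qform E v = qform X (v *m C *m U).
Proof. by rewrite /qform /E !trmx_mul sC -!mulmxA. Qed.

Lemma qformEU z : qform E (z *m U^T) = qform C (z *m U^T).
Proof. by rewrite /qform /E !trmx_mul trmxK -!mulmxA hSXS. Qed.

Lemma sD : D^T = D.
Proof. by rewrite /D /E linearB /= !trmx_mul sC sX trmxK !mulmxA. Qed.

Lemma qformD_eq (v : 'rV[R]_n) :
  v *m D *m v^T = (v - v *m C *m U *m X *m U^T) *m C *m (v - v *m C *m U *m X *m U^T)^T.
Proof.
rewrite /D /E mulmxBr mulmxBl [in RHS]linearB /= !mulmxBl !mulmxBr !trmx_mul !trmxK sC sX -!mulmxA. by rewrite hXSX subrr subr0.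
Qed.

Lemma psdD : psd D.
Proof.
split; first exact: sD.
by move=> v; rewrite /qform qformD_eq; case: pC => _; apply.
Qed.

Lemma sel_row (s : 'I_k -> 'I_n) j :
  (delta_mx 0 j : 'rV[R]_k) *m (sel_mx R s)^T = delta_mx 0 (s j).
Proof. by rewrite -rowE; apply/rowP => i; rewrite !mxE eqxx /= eq_sym. Qed.

Variable s : 'I_k -> 'I_n.
Hypothesis hU : U = sel_mx R s.
Hypothesis sinj : injective s.
Hypothesis topk : forall j i, (forall j', s j' != i) -> C i i <= C (s j) (s j).
Hypothesis n0 : (0 < n)%N.
Hypothesis kn : (k <= n)%N.

Let I := s @: [set: 'I_k].
Let T := \sum_j C (s j) (s j).

Lemma sum_I (F : 'I_n -> R) : \sum_(i | i \in I) F i = \sum_j F (s j).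
Proof.
rewrite /I big_imset /=; last by move=> a b _ _; apply: sinj.
by apply: eq_bigl => j; rewrite inE.
Qed.

Lemma notI i : i \notin I -> forall j', s j' != i.
Proof.
move=> hi j'; apply/eqP => e; move: hi; rewrite -e.
by rewrite /I mem_imset // inE.
Qed.

Lemma cardI : #|I| = k.
Proof. by rewrite /I card_imset // cardsT card_ord. Qed.

Lemma trE_ge : T <= \tr E.
Proof.
rewrite trace_qform (bigID (mem I)) /= sum_I.
rewrite -[T]addr0; apply: lerD.
  apply: ler_sum => j _.
  by rewrite -(sel_row s) -hU qformEU hU sel_row qform_e lexx.
apply: sumr_ge0 => i _; rewrite qformE qformX; case: pC => _; apply.
Qed.

Lemma topk_bound : k%:R * \tr C <= n%:R * T.
Proof.
have ->: \tr C = T + \sum_(i | i \notin I) C i i.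
  by rewrite /mxtrace (bigID (mem I)) /= sum_I.
have h : forall i, i \notin I -> k%:R * C i i <= T.
  move=> i hi; rewrite -[k in k%:R](card_ord k) -sumr_const.
  rewrite mulr_suml; apply: ler_sum => j _; rewrite mul1r; apply: topk => j'; exact: notI i hi j'.
have h2 : k%:R * \sum_(i | i \notin I) C i i <= (n - k)%:R * T.
  rewrite mulr_sumr; apply: le_trans (_ : \sum_(i | i \notin I) T <= _).
    by apply: ler_sum => i hi; apply: h.
  rewrite sumr_const -mulr_natl.
  have -> : #|[pred i | i \notin I]| = (n - k)%N.
    rewrite -cardI -[n in (n - _)%N](card_ord n) -(cardC I) addKn; apply: eq_card => i; by rewrite !inE.
  by rewrite mulr1 mulr_natl.
rewrite natrB // in h2; nra.
Qed.

Lemma trD : \tr D <= (1 - k%:R / n%:R) * \tr C.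
Proof.
have h1 := trE_ge; have h2 := topk_bound.
have tC : 0 <= \tr C := psd_tr pC.
have hn : 0 < n%:R :> R by rewrite ltr0n.
have h3 : k%:R / n%:R * \tr C <= T by rewrite mulrAC ler_pdivrMr // (mulrC T).
rewrite /D linearB /= mulrBl mul1r; lra.
Qed.
End SR.

Lemma SRk_main n k (G A : 'M[R]_n) (s : 'I_k -> 'I_n) :
  psd (G - A) -> selects_topk (G - A) s -> (0 < n)%N -> (k <= n)%N ->
  psd (SRk G A (sel_mx R s) - A) /\
  \tr (SRk G A (sel_mx R s) - A) <= (1 - k%:R / n%:R) * \tr (G - A).
Proof.
move=> pC [sinj topk] n0 kn.
set C := G - A; set U := sel_mx R s.
have -> : SRk G A U - A = C - C *m U *m mp_pinv (U^T *m C *m U) *m U^T *m C.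
  rewrite /SRk; case: ifP => [/eqP h|_].
    by rewrite /C mulmxBl h subrr !mul0mx subr0.
  by rewrite addrAC.
split; first exact: psdD.
exact: (trD pC (erefl U) sinj topk n0 kn).
Qed.
Lemma psd_diag n (A : 'M[R]_n) i : psd A -> 0 <= A i i.
Proof. by case=> _ h; rewrite -qform_e. Qed.
Lemma psd_of_loewner n (A : 'M[R]_n) a : 0 <= a -> loewner_le a%:M A -> psd A.
Proof. by move=> ha hA; rewrite -(subrK a%:M A); apply: psd_add => //; apply: psd_scalar. Qed.
End Aux.

Theorem mainTheorem3 (R : realType) (d k : nat)
  (f : 'rV[R]_d -> R) (H : 'rV[R]_d -> 'M[R]_d) (mu L M : R)
  (x xp : 'rV[R]_d) (B : 'M[R]_d) (s : 'I_k -> 'I_d) :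
  hessian_of f H ->
  0 < mu ->
  (forall y, loewner_le (mu%:M) (H y) /\ loewner_le (H y) (L%:M)) ->
  strongly_self_concordant H M ->
  (1 <= k)%N -> (k < d)%N ->
  B^T = B -> loewner_le (H x) B ->
  let r := anorm (H x) (xp - x) in
  let P := (1 + M * r / 2) ^+ 2 *: B in
  selects_topk (P - H xp) s ->
  let Bp := SRk P (H xp) (sel_mx R s) in
  loewner_le (H xp) Bp /\
  \tr (Bp - H xp) / \tr (H xp) <=
    (1 - k%:R / d%:R) * (1 + M * r / 2) ^+ 4 *
      (\tr (B - H x) / \tr (H x) + 2 * M * r).
Proof.
move=> _ mu0 hmu ssc k1 kd sB hB r P hsel Bp.
have d0 : (0 < d)%N by lia.
pose e0 := Ordinal d0.
have pHx : psd (H x) by apply: (psd_of_loewner (ltW mu0)); case: (hmu x).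
have pHp : psd (H xp) by apply: (psd_of_loewner (ltW mu0)); case: (hmu xp).
have A1 : psd ((M * r) *: H x - (H xp - H x)) := ssc x xp x x.
have er : anorm (H x) (x - xp) = r by rewrite /r /anorm -opprB qform_opp.
have A2 : psd ((M * r) *: H xp - (H x - H xp)).
  by have := ssc xp x x xp; rewrite er.
have A3 : psd ((M * r) *: H x - (H x - H xp)).
  by have := ssc xp x x x; rewrite er.
set t := M * r.
have q0 : mu <= H x e0 e0.
  have := psd_diag e0 (proj1 (hmu x)); rewrite !mxE eqxx /=; lra.
have t0 : 0 <= t.
  have := psd_diag e0 A1; have := psd_diag e0 A3; rewrite !mxE => h1 h2; rewrite /t; nra.
set c := 1 + M * r / 2.
have ct : c = 1 + t / 2 by [].
have pPH : psd (P - H xp).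
  split.
    by rewrite linearB /= linearZ /= sB (proj1 pHp).
  move=> u; rewrite qformB qformZ.
  have h1 := (proj2 hB) u; have h2 := (proj2 pHx) u; have h3 := (proj2 A1) u.
  rewrite qformB in h1; rewrite qformB qformZ qformB in h3.
  have h4 : 0 <= c ^+ 2 * (qform B u - qform (H x) u) by apply: mulr_ge0; [rewrite sqr_ge0 | exact: h1].
  have h5 : 0 <= t ^+ 2 / 4 * qform (H x) u by apply: mulr_ge0 => //; apply: divr_ge0; rewrite ?sqr_ge0.
  rewrite /c /t in h3 h4 h5 *; nra.
have [pBp trBp] := SRk_main pPH hsel d0 (ltnW kd).
split; first exact: pBp.
rewrite -/Bp in trBp.
set q := \tr (Bp - H xp) in trBp *.
have eTP : \tr (P - H xp) = c ^+ 2 * \tr B - \tr (H xp) by rewrite linearB /= mxtraceZ.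
have eTB : \tr (B - H x) = \tr B - \tr (H x) by rewrite linearB.
rewrite eTP in trBp; rewrite eTB.
set a := \tr B; set h := \tr (H x); set p := \tr (H xp).
have hp : 0 < p.
  have := psd_tr (proj1 (hmu xp)); rewrite linearB /= mxtrace_scalar subr_ge0 => hh.
  apply: lt_le_trans hh; rewrite pmulrn_lgt0 //.
have hh : 0 < h.
  have := psd_tr (proj1 (hmu x)); rewrite linearB /= mxtrace_scalar subr_ge0 => hh.
  apply: lt_le_trans hh; rewrite pmulrn_lgt0 //.
have hah : h <= a by have := psd_tr hB; rewrite linearB /= subr_ge0.
have hhp : h <= (1 + t) * p.
  by have := psd_tr A2; rewrite linearB /= linearB /= mxtraceZ; move=> hh2; rewrite /t /h /p; lra.
set kap := 1 - k%:R / d%:R.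
have kap0 : 0 <= kap.
  rewrite /kap subr_ge0 ler_pdivrMr ?ltr0n // mul1r ler_nat; exact: ltnW.
have pn0 : p != 0 by rewrite gt_eqF.
have hn0 : h != 0 by rewrite gt_eqF.
have stA : q / p <= kap * (c ^+ 2 * a / p - 1).
  rewrite ler_pdivrMr //.
  have -> : kap * (c ^+ 2 * a / p - 1) * p = kap * (c ^+ 2 * a - p) by field.
  exact: trBp.
have stB : c ^+ 2 * a / p <= c ^+ 4 * (a / h).
  rewrite -subr_ge0.
  have -> : c ^+ 4 * (a / h) - c ^+ 2 * a / p = c ^+ 2 * a * (c ^+ 2 * p - h) / (h * p) by field; rewrite ?pn0 ?hn0 ?mulf_neq0.
  apply: divr_ge0; last by apply: mulr_ge0; apply: ltW.
  apply: mulr_ge0; first by apply: mulr_ge0; [rewrite sqr_ge0 | lra].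
  rewrite subr_ge0 ct; nra.
have stC : c ^+ 4 * (1 - 2 * t) <= 1.
  rewrite ct.
  have : 0 <= t ^+ 2 by rewrite sqr_ge0.
  have : 0 <= t ^+ 3 by rewrite exprn_ge0.
  have : 0 <= t ^+ 4 by rewrite exprn_ge0.
  have : 0 <= t ^+ 5 by rewrite exprn_ge0.
  nra.
have e2 : (a - h) / h = a / h - 1 by field.
rewrite e2.
apply: (le_trans stA).
have key : c ^+ 2 * a / p - 1 <= c ^+ 4 * (a / h - 1 + 2 * t) by lra.
have := ler_wpM2l kap0 key.
rewrite /t; lra.
Qed.
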